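(* Let $\mathcal{B}$ and $\mathcal{B}'$ be the periodic $0$-th barcodes derived from periodic merge trees $\mathcal{M}$ and $\mathcal{M}'$. If $\mathcal{M}'$ splinters $\mathcal{M}$, then $\mathcal{B}'=\mathcal{B}$.
   Context: Each periodic merge tree is $\mathcal{M}(F,\Lambda)$ for a $d$-dimensional lattice $\Lambda\subseteq\mathbb{R}^d$ and a $\Lambda$-periodic filter $F$ on a $\Lambda$-periodic locally finite cell complex $K$ ($\sigma+u\in K$, $F(\sigma+u)=F(\sigma)$ for $u\in\Lambda$; $F(\sigma)\le F(\tau)$ for faces $\sigma$ of $\tau$): the merge tree of the quotient filter $F/\Lambda$ on the finite quotient complex $K/\Lambda$, i.e. the quotient of $\{(x,s): x\in(K/\Lambda)_s\}$ (sublevel sets) by $(x,s)\sim(y,t)$ iff $s=t$ and $x,y$ lie in the same component of $(K/\Lambda)_s$, with height $h$ (the $s$-coordinate); points are identified with components; $B$ covers $A$ if $h(A)\le h(B)$, $A\subseteq B$. Its frequency $\Phi(\Gamma)=\frac{\mathrm{vol}_p(\Lambda_\Gamma)}{\mathrm{vol}_d(\Lambda)}\nu_{d-p}R^{d-p}$, where, with $\phi\colon\mathbb{R}^d\to\mathbb{R}^d/\Lambda$ the projection, $\Lambda_\Gamma=\{u\in\Lambda:\gamma+u=\gamma\}$ for a component $\gamma$ of $\phi^{-1}(\Gamma)$, $p=\dim\Lambda_\Gamma$, $\mathrm{vol}_q$ is the $q$-volume of a unit cell ($\mathrm{vol}_0(\{0\})=1$), $\nu_q$ the volume of the unit $q$-ball.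 Monomials ordered by $tR^a<sR^b$ iff $a<b$, or $a=b$ and $t<s$. Interleaving distance: continuous maps $\varphi\colon\mathcal{M}\to\mathcal{M}'$, $\psi\colon\mathcal{M}'\to\mathcal{M}$ are $\varepsilon$-compatible if $h'\circ\varphi=h+\varepsilon$, $h\circ\psi=h'+\varepsilon$, $\psi\varphi(\Gamma)$ covers $\Gamma$, $\varphi\psi(\Gamma')$ covers $\Gamma'$, $\Phi'(\varphi(\Gamma))\le\Phi(\Gamma)$, $\Phi(\psi(\Gamma'))\le\Phi'(\Gamma')$; $d_I$ is the infimum of such $\varepsilon\ge 0$. $\mathcal{M}_\Gamma$ is the subtree of points covered by $\Gamma$. $\mathcal{M}'$ splinters $\mathcal{M}$ if there is a continuous surjection $\omega\colon\mathcal{M}'\to\mathcal{M}$ with $h\circ\omega=h'$ such that for every $\Gamma\in\mathcal{M}$ and all $A,B\in\omega^{-1}(\Gamma)$: $d_I(\mathcal{M}'_A,\mathcal{M}'_B)=0$, $\omega$ maps each of $\mathcal{M}'_A,\mathcal{M}'_B$ onto $\mathcal{M}_\Gamma$, and $\Phi'(A)=\Phi'(B)=\Phi(\Gamma)/|\omega^{-1}(\Gamma)|$. Periodic $0$-th barcode of $\mathcal{M}$: decompose $\mathcal{M}$ into beams by the elder rule: each point of minimal height (component appearing at a vertex) starts a beam, continuing through the points covering it; where two beams meet, the beam whose start has larger height ends (ties broken arbitrarily) and the other continues; the beam with globally minimal start continues to $+\infty$. An epoch is a maximal interval of a beam with constant frequency. For each epoch starting at $A$ and ending when entering $B$ (where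 the frequency changes or the beam ends; $h(B)=\infty$ if never), on a beam starting at $C$, with $\Phi(A)=s\,\nu_{d-p}R^{d-p}$, add bar $[h(C),h(B))$ with multiplicity $s$ and, if $h(A)>h(C)$, bar $[h(C),h(A))$ with multiplicity $-s$ to the $(d-p)$-ary barcode, the function $\beta_{d-p}\colon\mathbb{R}\times(-\infty,\infty]\to\mathbb{R}$ sending $(b,e)$ to the total multiplicity of its bars $[b,e)$. The periodic $0$-th barcode is $(\beta_0,\dots,\beta_d)$. *)

(* Defs.v *)
From HB Require Import structures.
From mathcomp Require Import all_boot all_order all_algebra.
From mathcomp Require Import all_classical all_reals.
From mathcomp Require Import ereal topology normedtype.
Set Implicit Arguments. Unset Strict Implicit. Unset Printing Implicit Defensive.
Import Order.TTheory GRing.Theory Num.Theory.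
Import numFieldNormedType.Exports.
Local Open Scope classical_set_scope.
Local Open Scope ring_scope.

Section PeriodicMergeTrees.
Variables (R : realType) (d : nat).
Local Notation V := 'rV[R]_d.

(** points of merge trees: (height s, Lambda-saturated preimage of a component) *)
Definition pt := (R * set V)%type.

Definition introw (p : nat) : set 'rV[R]_p :=
  [set z | forall i, z 0 i \is a Num.int].

Definition lat (Bm : 'M[R]_d) : set V := [set z *m Bm | z in @introw d].

Definition is_zbasis (L : set V) (p : nat) (W : 'M[R]_(p, d)) :=
  row_free W /\ L = [set z *m W | z in @introw p].

(** p-volume of a unit cell (vol_0({0}) = 1) and dimension of a lattice *)
Definition latvol (L : set V) : R :=
  xget 0 [set v | exists p (W : 'M[R]_(p, d)),
                    is_zbasis L W /\ v = Num.sqrt (\det (W *m W^T))].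
Definition latdim (L : set V) : nat :=
  xget 0%N [set p | exists W : 'M[R]_(p, d), is_zbasis L W].

Definition tr (S : set V) (u : V) : set V := [set x + u | x in S].

(** cell complex axioms (regular cell complex, closed cells, faces = subcells) *)
Definition cball (k : nat) : set 'rV[R]_k := [set x | `|x| <= 1].
Definition csphere (k : nat) : set 'rV[R]_k := [set x | `|x| = 1].

Definition proper_faces (K : set (set V)) (s : set V) : set V :=
  \bigcup_(t in [set t | K t /\ t `<=` s /\ t <> s]) t.

Definition open_cell (K : set (set V)) (s : set V) : set V :=
  s `\` proper_faces K s.

Definition cell_complex (K : set (set V)) : Prop :=
  [/\ (forall s, K s -> exists k (f : 'rV[R]_k -> V),
          [/\ {within @cball k, continuous f},
              (forall x y, @cball k x -> @cball k y -> f x = f y -> x = y),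
              f @` @cball k = s &
              f @` @csphere k = proper_faces K s]),
      (forall s t, K s -> K t -> s <> t ->
          open_cell K s `&` open_cell K t = set0) &
      (forall x : V, exists2 e : R, 0 < e &
          finite_set [set s | K s /\ s `&` ball x e !=set0])].

Definition periodic_filtered_complex (Bm : 'M[R]_d) (K : set (set V))
    (F : set V -> R) : Prop :=
  [/\ Bm \in unitmx,
      cell_complex K,
      (forall s u, K s -> lat Bm u -> K (tr s u) /\ F (tr s u) = F s),
      (forall s t, K s -> K t -> s `<=` t -> F s <= F t) &
      exists2 S : set (set V), finite_set S /\ S `<=` K &
        forall s, K s -> exists t u, [/\ S t, lat Bm u & s = tr t u]].

(** sublevel set (preimage in R^d of (K/Lambda)_s) *)
Definition sublevel (K : set (set V)) (F : set V -> R) (s : R) : set V :=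
  \bigcup_(c in [set c | K c /\ F c <= s]) c.

Definition comp K F (s : R) (x : V) : set V :=
  connected_component (sublevel K F s) x.

(** preimage under phi of the component of (K/Lambda)_s containing phi(x) *)
Definition ocomp (Bm : 'M[R]_d) K F (s : R) (x : V) : set V :=
  [set y | exists2 u, lat Bm u & tr (comp K F s x) u y].

Definition qmap Bm K F (x : V) (s : R) : pt := (s, ocomp Bm K F s x).

Definition mt_points Bm K F : set pt :=
  [set p | exists x, sublevel K F p.1 x /\ p.2 = ocomp Bm K F p.1 x].

(** quotient topology from {(x,s) : x in sublevel s} *)
Definition mt_open Bm K F (U : set pt) : Prop :=
  U `<=` mt_points Bm K F /\
  exists2 O : set (V * R), open O &
    forall x s, sublevel K F s x -> (U (qmap Bm K F x s) <-> O (x, s)).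

(** frequency, encoded as (s, k) standing for s * nu_k * R^k *)
Definition stab (Bm : 'M[R]_d) K F (p : pt) : set V :=
  [set u | lat Bm u /\ forall x, p.2 x -> tr (comp K F p.1 x) u = comp K F p.1 x].

Definition freq Bm K F (p : pt) : R * nat :=
  (latvol (stab Bm K F p) / latvol (lat Bm), (d - latdim (stab Bm K F p))%N).

(** monomial order: t R^a <= s R^b *)
Definition mle (m1 m2 : R * nat) : Prop :=
  (m1.2 < m2.2)%N \/ (m1.2 = m2.2 /\ m1.1 <= m2.1).

Record ftree := FTree {
  fpts : set pt;
  fopen : set pt -> Prop;
  ffreq : pt -> R * nat }.

Definition merge_tree Bm K F : ftree :=
  FTree (mt_points Bm K F) (mt_open Bm K F) (freq Bm K F).

Definition covers (Bp A : pt) : Prop := A.1 <= Bp.1 /\ A.2 `<=` Bp.2.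

Definition subtree (S : ftree) (G : pt) : ftree :=
  FTree [set A | fpts S A /\ covers G A]
        (fun U => exists2 U0, fopen S U0 &
                    U = U0 `&` [set A | fpts S A /\ covers G A])
        (ffreq S).

Definition cont (S S' : ftree) (f : pt -> pt) : Prop :=
  (forall x, fpts S x -> fpts S' (f x)) /\
  (forall U, fopen S' U -> fopen S (fpts S `&` f @^-1` U)).

Definition compatible (eps : R) (S S' : ftree) (phi psi : pt -> pt) : Prop :=
  [/\ cont S S' phi /\ cont S' S psi,
      (forall G, fpts S G -> (phi G).1 = G.1 + eps) /\
      (forall G, fpts S' G -> (psi G).1 = G.1 + eps),
      (forall G, fpts S G -> covers (psi (phi G)) G) /\
      (forall G, fpts S' G -> covers (phi (psi G)) G) &
      (forall G, fpts S G -> mle (ffreq S' (phi G)) (ffreq S G)) /\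
      (forall G, fpts S' G -> mle (ffreq S (psi G)) (ffreq S' G))].

(** d_I(S, S') = 0 : the infimum of compatible eps >= 0 is 0 *)
Definition dI_zero (S S' : ftree) : Prop :=
  forall delta : R, 0 < delta -> exists eps : R,
    [/\ 0 <= eps, eps < delta & exists phi psi, compatible eps S S' phi psi].

Definition splinters (S' S : ftree) : Prop :=
  exists om : pt -> pt,
    [/\ cont S' S om,
        (forall G, fpts S G -> exists2 A, fpts S' A & om A = G),
        (forall A, fpts S' A -> (om A).1 = A.1) &
        (forall G, fpts S G -> forall A Bq, fpts S' A -> fpts S' Bq ->
           om A = G -> om Bq = G ->
           [/\ dI_zero (subtree S' A) (subtree S' Bq),
               om @` fpts (subtree S' A) = fpts (subtree S G),
               om @` fpts (subtree S' Bq) = fpts (subtree S G) &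
               exists n : nat,
                 [/\ ([set A0 | fpts S' A0 /\ om A0 = G] #= `I_n)%card,
                     ffreq S' A = ((ffreq S G).1 / n%:R, (ffreq S G).2) &
                     ffreq S' Bq = ((ffreq S G).1 / n%:R, (ffreq S G).2)]])].

(** elder rule decomposition into beams: b G is the start of the beam through G *)
Definition leaf (S : ftree) (C : pt) : Prop :=
  fpts S C /\ forall A, fpts S A -> covers C A -> A = C.

Definition elder (S : ftree) (b : pt -> pt) : Prop :=
  forall G, fpts S G ->
    [/\ leaf S (b G), covers G (b G),
        (forall C, leaf S C -> covers G C -> (b G).1 <= C.1) &
        (forall G1, fpts S G1 -> covers G G1 -> covers G1 (b G) -> b G1 = b G)].

Definition seg (S : ftree) (b : pt -> pt) (A G : pt) : Prop :=
  [/\ fpts S G, covers G A, b G = b A &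
      forall G0, fpts S G0 -> covers G0 A -> covers G G0 -> ffreq S G0 = ffreq S A].

Definition epoch S b A : set pt := seg S b A.

Definition epoch_start (S : ftree) (b : pt -> pt) (A : pt) : Prop :=
  fpts S A /\ forall A0, fpts S A0 -> A0 <> A -> ~ seg S b A0 A.

Definition epoch_end S b A : \bar R :=
  ereal_sup [set (G.1)%:E | G in epoch S b A].

Definition barcode (S : ftree) (b : pt -> pt) (k : nat) (x : R) (e : \bar R) : R :=
  \sum_(A \in [set A | epoch_start S b A /\ (ffreq S A).2 = k])
    ((if ((b A).1 == x) && (epoch_end S b A == e) then (ffreq S A).1 else 0)
     - (if [&& (b A).1 == x, ((A.1)%:E == e) & (b A).1 < A.1]
        then (ffreq S A).1 else 0)).

End PeriodicMergeTrees.

(* Main.v *)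
Require Import Defs.
From HB Require Import structures.
From mathcomp Require Import all_boot all_order all_algebra.
From mathcomp Require Import all_classical all_reals.
From mathcomp Require Import ereal topology normedtype.
From mathcomp Require Import ring lra zify finmap.
Set Implicit Arguments. Unset Strict Implicit. Unset Printing Implicit Defensive.
Import Order.TTheory GRing.Theory Num.Theory.
Import numFieldNormedType.Exports.
Local Open Scope classical_set_scope.
Local Open Scope ring_scope.
Section Crit.
Variable R : realType.
Implicit Types (s : seq R).

Lemma prev_crit s (t : R) : (exists2 c, c \in s & c <= t) ->
  exists2 c, c \in s & c <= t /\ forall c', c' \in s -> ~ (c < c' <= t).
Proof.
elim: s => [[c]//|a s IH] [c]; rewrite inE => /orP[/eqP->|cs] ct.
- have [/IH [c0 c0s [c0t H]]|] := pselect (exists2 c, c \in s & c <= t).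
  + have [ac0|c0a] := leP a c0.
    * exists c0; first by rewrite inE c0s orbT.
      split=> // c'; rewrite inE => /orP[/eqP->|/H//]; lra.
    * exists a; first by rewrite inE eqxx.
      split=> // c'; rewrite inE => /orP[/eqP->|c's]; first lra.
      move=> /andP[ac' c't]; apply: (H c' c's); apply/andP; split=> //; lra.
  + move=> N; exists a; first by rewrite inE eqxx.
    split=> // c'; rewrite inE => /orP[/eqP->|c's]; first lra.
    move=> /andP[_ c't]; apply: N; by exists c'.
- have [c0 c0s [c0t H]] := IH (ex_intro2 _ _ c cs ct).
  have [at_|ta] := leP a t.
  + have [ac0|c0a] := leP a c0.
    * exists c0; first by rewrite inE c0s orbT.
      split=> // c'; rewrite inE => /orP[/eqP->|/H//]; lra.
    * exists a; first by rewrite inE eqxx.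
      split=> // c'; rewrite inE => /orP[/eqP->|c's]; first lra.
      move=> /andP[ac' c't]; apply: (H c' c's); apply/andP; split=> //; lra.
  + exists c0; first by rewrite inE c0s orbT.
    split=> // c'; rewrite inE => /orP[/eqP->|/H//]; lra.
Qed.

Lemma next_crit s (a : R) : exists t, a < t /\ forall c, c \in s -> ~ (a < c <= t).
Proof.
elim: s => [|c s [t [a_t H]]]; first by exists (a + 1); split=> //; lra.
have [/andP[ac ct]|N] := boolP ((a < c) && (c <= t)).
- exists ((a + c) / 2); split; first lra.
  move=> c'; rewrite inE => /orP[/eqP->|/H Hc']; first lra.
  move=> /andP[h1 h2]; apply: Hc'; apply/andP; split=> //; lra.
- exists t; split=> // c'; rewrite inE => /orP[/eqP->|/H//]; by apply/negP.
Qed.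

Lemma gap_below s (e : R) : exists t0, t0 < e /\ forall c, c \in s -> ~ (t0 <= c < e).
Proof.
elim: s => [|c s [t [te H]]]; first by exists (e - 1); split=> //; lra.
have [/andP[ac ct]|N] := boolP ((t <= c) && (c < e)).
- exists ((c + e) / 2); split; first lra.
  move=> c'; rewrite inE => /orP[/eqP->|/H Hc']; first lra.
  move=> /andP[h1 h2]; apply: Hc'; apply/andP; split=> //; lra.
- exists t; split=> // c'; rewrite inE => /orP[/eqP->|/H//]; by apply/negP.
Qed.

Lemma above_all s : exists t, forall c, c \in s -> c < t.
Proof.
elim: s => [|c s [t H]]; first by exists 0.
exists (Num.max t (c + 1)) => c'; rewrite inE => /orP[/eqP->|/H]; rewrite lt_max.
  by apply/orP; right; lra.
by move=> ->.
Qed.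

Lemma count_lt_strict s (a b : R) : (exists2 c, c \in s & a <= c < b) ->
  (count (fun c : R => (c < a)%R) s < count (fun c : R => (c < b)%R) s)%N.
Proof.
elim: s => [[]//|c s IH] [c0]; rewrite inE /= => /orP[/eqP->|c0s] /andP[h1 h2].
- have : (count (fun c : R => (c < a)%R) s <= count (fun c : R => (c < b)%R) s)%N.
    by apply: sub_count => y /= ya; lra.
  rewrite ltNge h1 h2 /=; lia.
- have := IH (ex_intro2 _ _ c0 c0s (introT andP (conj h1 h2))).
  case: (ltP c a) => ca; case: (ltP c b) => cb /=; try lra; lia.
Qed.
End Crit.
Section Arith.
Variable R : realType.
Lemma arith (s x r t0 a : R) (e : \bar R) : x <= a -> (a%:E < e)%E ->
  (forall e', e = e'%:E -> ~ (t0 <= e' < r)) -> ~ (t0 <= a < r) -> x < r -> t0 < r ->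
  (if e == r%:E then s else 0) - (if (a%:E == r%:E) && (x < a) then s else 0) =
  (if (a <= t0) && (t0%:E < e)%E then s else 0) - (if (a <= r) && (r%:E < e)%E then s else 0).
Proof.
move=> xa ae He Ha xr t0r; rewrite eqe.
have [at0|t0a] := boolP (a <= t0); last rewrite -ltNge in t0a.
- have -> : (a == r) = false by apply/negbTE; rewrite neq_lt; apply/orP; left; lra.
  have -> : a <= r by lra.
  rewrite /= subr0; case: e ae He => [e'| |] //= ae He.
  + rewrite !lte_fin eqe in ae *; have := He e' erefl => He'.
    have [->|ne] := eqVneq e' r; first by rewrite t0r ltxx subr0.
    have [et0|t0e] := boolP (e' < t0); last rewrite -leNgt in t0e.
    * have -> : (t0 < e') = false by apply/negbTE; rewrite -leNgt; lra.
      have -> : (r < e') = false by apply/negbTE; rewrite -leNgt; lra.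
      by rewrite subr0.
    * have re : r < e'.
        rewrite lt_neqAle eq_sym ne /=; rewrite leNgt; apply/negP => h; apply: He'; lra.
      by rewrite re (lt_le_trans t0r (ltW re)) subrr.
  + by rewrite !ltry subrr.
- have ra : r <= a by rewrite leNgt; apply/negP => h; apply: Ha; lra.
  have -> : (e == r%:E) = false.
    by apply/negbTE; apply: contraTneq ae => ->; rewrite lte_fin -leNgt.
  have [ar|ar] := eqVneq a r.
  + subst a; rewrite xr lexx /=.
    by rewrite ae.
  + have -> : a <= r = false by apply/negbTE; rewrite -ltNge lt_neqAle eq_sym ar ra.
    by [].
Qed.
End Arith.
Section Nice.
Variables (R : realType) (d : nat).
Local Notation P := (pt R d).
Variables (T : ftree R d) (Cr : seq R).

Definition nocrit (a b : R) := forall c, c \in Cr -> ~ (a < c <= b).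

Definition nice := [/\ (forall p, fpts T p -> exists2 c, c \in Cr & c <= p.1),
  (forall t, finite_set [set p | fpts T p /\ p.1 = t]),
  (forall p q a, fpts T p -> fpts T q -> fpts T a -> p.1 = q.1 ->
       covers p a -> covers q a -> p = q),
  (forall a t, fpts T a -> a.1 <= t -> exists p, [/\ fpts T p, p.1 = t & covers p a]) &
  (forall p t, fpts T p -> nocrit t p.1 -> nocrit p.1 t ->
       fpts T (t, p.2) /\ ffreq T (t, p.2) = ffreq T p)].

Hypothesis Hn : nice.
Variable b : P -> P.
Hypothesis Hb : elder T b.

Lemma covers_refl (p : P) : covers p p.
Proof. by split. Qed.

Lemma covers_trans (p q r : P) : covers p q -> covers q r -> covers p r.
Proof. by move=> [h1 s1] [h2 s2]; split; [exact: le_trans h2 h1|exact: subset_trans s2 s1]. Qed.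

Lemma covers_anti (p q : P) : covers p q -> covers q p -> p = q.
Proof.
case: p q => [p1 p2] [q1 q2] [/= h1 s1] [/= h2 s2].
by rewrite (@le_anti _ _ p1 q1) ?h1 ?h2 // (_ : p2 = q2) //; apply/seteqP; split.
Qed.

Lemma n0 p : fpts T p -> exists2 c, c \in Cr & c <= p.1.
Proof. by case: Hn => H _ _ _ _; apply: H. Qed.
Lemma n1 t : finite_set [set p | fpts T p /\ p.1 = t].
Proof. by case: Hn => _ H _ _ _; apply: H. Qed.
Lemma n2 p q a : fpts T p -> fpts T q -> fpts T a -> p.1 = q.1 ->
       covers p a -> covers q a -> p = q.
Proof. by case: Hn => _ _ H _ _; apply: H. Qed.
Lemma n3 a t : fpts T a -> a.1 <= t -> exists p, [/\ fpts T p, p.1 = t & covers p a].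
Proof. by case: Hn => _ _ _ H _; apply: H. Qed.
Lemma n4 p t : fpts T p -> nocrit t p.1 -> nocrit p.1 t ->
       fpts T (t, p.2) /\ ffreq T (t, p.2) = ffreq T p.
Proof. by case: Hn => _ _ _ _ H; apply: H. Qed.

Lemma same_height p q : fpts T p -> fpts T q -> p.1 = q.1 -> covers p q -> p = q.
Proof. by move=> fp fq e c; apply: (n2 fp fq fq e c (covers_refl q)). Qed.

Lemma prev p : fpts T p -> exists2 c, c \in Cr & c <= p.1 /\ nocrit c p.1.
Proof. by move=> /n0 /prev_crit. Qed.

Lemma crit_le x a t : x \in Cr -> x <= t -> nocrit a t -> x <= a.
Proof. move=> xC xt nc; rewrite leNgt; apply/negP => ax; apply: (nc x xC); lra. Qed.

Lemma flat_down p c t : fpts T p -> nocrit c p.1 -> c <= t -> t <= p.1 ->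
  fpts T (t, p.2) /\ ffreq T (t, p.2) = ffreq T p.
Proof.
move=> fp nc ct tp; apply: n4 => // c' c'C h; first by apply: (nc c' c'C); lra.
lra.
Qed.

Lemma flat_up p t : fpts T p -> p.1 <= t -> nocrit p.1 t ->
  fpts T (t, p.2) /\ ffreq T (t, p.2) = ffreq T p.
Proof. by move=> fp pt nc; apply: n4 => // c' c'C h; lra. Qed.

Lemma leaf_crit C : leaf T C -> C.1 \in Cr.
Proof.
move=> [fC lC]; have [c cC [cle nc]] := prev fC.
have [fq _] := flat_down fC nc (lexx c) cle.
have := lC _ fq; rewrite /covers /= => /(_ (conj cle (@subset_refl _ _))).
by move=> E; rewrite -E.
Qed.

Lemma b_leaf G : fpts T G -> leaf T (b G).
Proof. by move=> /Hb []. Qed.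
Lemma b_cov G : fpts T G -> covers G (b G).
Proof. by move=> /Hb []. Qed.
Lemma b_min G C : fpts T G -> leaf T C -> covers G C -> (b G).1 <= C.1.
Proof. by move=> /Hb [] _ _ H _; apply: H. Qed.
Lemma b_beam G G1 : fpts T G -> fpts T G1 -> covers G G1 -> covers G1 (b G) -> b G1 = b G.
Proof. by move=> /Hb [] _ _ _ H; apply: H. Qed.
Lemma b_crit G : fpts T G -> (b G).1 \in Cr.
Proof. by move=> /b_leaf /leaf_crit. Qed.
Lemma b_pts G : fpts T G -> fpts T (b G).
Proof. by move=> /b_leaf []. Qed.

Local Notation seg := (seg T b).

Lemma seg_refl A : fpts T A -> seg A A.
Proof.
move=> fA; split=> // [|G0 fG0 c1 c2]; first exact: covers_refl.
by rewrite (covers_anti c1 c2).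
Qed.

Lemma seg_freq A G : seg A G -> ffreq T G = ffreq T A.
Proof. by case=> fG cGA _ H; apply: H => //; apply: covers_refl. Qed.

Lemma seg_trans A B G : fpts T A -> seg A B -> seg B G -> seg A G.
Proof.
move=> fA [fB cBA bBA HAB] [fG cGB bGB HBG]; split=> //.
- exact: covers_trans cGB cBA.
- by rewrite bGB.
move=> G0 fG0 cG0A cGG0; have [h|h] := leP G0.1 B.1.
- have [Q [fQ Q1 cQG0]] := n3 fG0 h.
  have QB : Q = B := n2 fQ fB fA Q1 (covers_trans cQG0 cG0A) cBA.
  by subst Q; apply: HAB.
- have [Q [fQ Q1 cQB]] := n3 fB (ltW h).
  have QG0 : Q = G0 := n2 fQ fG0 fA Q1 (covers_trans cQB cBA) cG0A.
  subst Q; rewrite (HBG G0 fG0 cQB cGG0).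
  by apply: HAB => //; apply: covers_refl.
Qed.

Lemma seg_down A G t : fpts T A -> seg A G -> A.1 <= t -> t <= G.1 ->
  exists Q, [/\ fpts T Q, Q.1 = t, seg A Q & covers G Q].
Proof.
move=> fA [fG cGA bGA H] h1 h2.
have [Q [fQ Q1 cQA]] := n3 fA h1.
have [Q' [fQ' Q'1 cQ'Q]] : exists p, [/\ fpts T p, p.1 = G.1 & covers p Q].
  by apply: n3 => //; rewrite Q1.
have Q'G : Q' = G := n2 fQ' fG fA Q'1 (covers_trans cQ'Q cQA) cGA.
subst Q'; exists Q; split=> //; split=> //.
- rewrite (b_beam fG fQ cQ'Q) ?bGA //.
  by apply: covers_trans cQA (b_cov fA).
- by move=> G0 fG0 c1 c2; apply: H => //; apply: covers_trans cQ'Q c2.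
Qed.

Lemma seg_up A G t : fpts T A -> seg A G -> G.1 <= t -> nocrit G.1 t -> seg A (t, G.2).
Proof.
move=> fA [fG cGA bGA H] h nc; have [fG' frG'] := flat_up fG h nc.
have cG'G : covers (t, G.2) G by split.
split=> //.
- exact: covers_trans cG'G cGA.
- rewrite -bGA; apply/esym/(b_beam fG' fG cG'G).
  have [c1 c2] := b_cov fG'; split=> //.
  by apply: crit_le nc; [apply: b_crit|].
move=> G0 fG0 cG0A cG'G0; have [h'|h'] := leP G0.1 G.1.
- have [Q [fQ Q1 cQG0]] := n3 fG0 h'.
  have QG : Q = G := n2 fQ fG fA Q1 (covers_trans cQG0 cG0A) cGA.
  by subst Q; apply: H.
- have nc' : nocrit G.1 G0.1.
    move=> c cC hc; apply: (nc c cC); case: cG'G0 => /= h2 _; lra.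
  have [fQ frQ] := flat_up fG (ltW h') nc'.
  have QG0 : (G0.1, G.2) = G0.
    apply: same_height => //; split=> //=; case: cG'G0 => _ /=; done.
  rewrite -QG0 frQ; apply: H => //; exact: covers_refl.
Qed.

Lemma seg_prev A1 : fpts T A1 -> exists c, [/\ c \in Cr, c <= A1.1,
  fpts T (c, A1.2) & seg (c, A1.2) A1].
Proof.
move=> fA1; have [c cC [cle nc]] := prev fA1.
have [fA2 frA2] := flat_down fA1 nc (lexx c) cle.
have cA1A2 : covers A1 (c, A1.2) by split.
exists c; split=> //; split=> //.
- apply/esym/(b_beam fA1 fA2 cA1A2); have [c1 c2] := b_cov fA1; split=> //=.
  by apply: crit_le nc; [apply: b_crit|].
move=> G0 fG0 [h1 s1] [h2 s2]; rewrite frA2.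
have -> : G0 = (G0.1, A1.2).
  by case: G0 fG0 h1 s1 h2 s2 => g1 g2 /= *; congr pair; apply/seteqP; split.
by have [_ ->] := flat_down fA1 nc h1 h2.
Qed.


Local Notation ES := (epoch_start T b).
Local Notation eend := (epoch_end T b).

Lemma es_crit A : ES A -> A.1 \in Cr.
Proof.
move=> [fA nA]; have [c [cC cle fA2 sA2]] := seg_prev fA.
have [<-|ne] := eqVneq c A.1; first by [].
exfalso; apply: (nA _ fA2) sA2 => E; move: ne; by rewrite -E /= eqxx.
Qed.

Lemma es_exists_aux n P0 : (count (fun c : R => (c < P0.1)%R) Cr < n)%N -> fpts T P0 ->
  exists A, ES A /\ seg A P0.
Proof.
elim: n P0 => [//|n IH] P0 hn fP0.
have [[A1 [fA1 ne sA1]]|N] := pselect (exists A1, [/\ fpts T A1, A1 <> P0 & seg A1 P0]); last first.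
  exists P0; split; last exact: seg_refl.
  split=> // A0 fA0 ne s; apply: N; by exists A0.
have [c [cC cle fA2 sA2]] := seg_prev fA1.
have lt1 : A1.1 < P0.1.
  case: (sA1) => _ [h _] _ _; rewrite lt_neqAle h andbT; apply/eqP => E.
  by apply: ne; apply/esym/same_height => //; case: sA1.
have : (count (fun c' : R => (c' < (c, A1.2).1)%R) Cr < n)%N.
  have : exists2 c0, c0 \in Cr & c <= c0 < P0.1.
    by exists c => //; rewrite lexx /=; lra.
  move=> /count_lt_strict /= h; rewrite /=; exact: (leq_trans h).
move=> /IH /(_ fA2) [A [eA sA]].
exists A; split=> //; apply: seg_trans (sA1); first by case: eA.
by apply: seg_trans sA2 => //; case: eA.
Qed.

Lemma es_exists P0 : fpts T P0 -> exists A, ES A /\ seg A P0.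
Proof. by apply: es_exists_aux. Qed.

Lemma es_unique A A' P0 : ES A -> ES A' -> seg A P0 -> seg A' P0 -> A = A'.
Proof.
wlog h : A A' / A.1 <= A'.1.
  move=> W eA eA' s s'; have [h|h] := leP A.1 A'.1; first exact: W.
  by apply/esym/W => //; apply: ltW.
move=> [fA nA] [fA' nA'] sA sA'.
have hA'P : A'.1 <= P0.1 by case: (sA') => _ [].
have [Q [fQ Q1 sQ _]] := seg_down fA sA h hA'P.
have QA' : Q = A'.
  apply: (n2 fQ fA' (b_pts fA) Q1).
  - by case: (sQ) => _ _ bQ _; rewrite -bQ; exact: b_cov.
  - by case: (sA) => _ _ bP _; case: (sA') => _ _ bP' _; rewrite -bP bP'; exact: b_cov.
subst Q; apply: contrapT => ne; exact: (nA' A fA ne sQ).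
Qed.

Lemma in_epoch A t : fpts T A ->
  (A.1 <= t /\ (t%:E < eend A)%E) <-> exists G, seg A G /\ G.1 = t.
Proof.
move=> fA; split.
- move=> [h1 /ereal_sup_gt [_ [G sG <-]]]; rewrite lte_fin => h2.
  have [Q [fQ Q1 sQ _]] := seg_down fA sG h1 (ltW h2).
  by exists Q.
- move=> [G [sG <-]]; split; first by case: (sG) => _ [].
  have [t' [h nc]] := next_crit Cr G.1.
  have sG' := seg_up fA sG (ltW h) nc.
  apply: (@lt_le_trans _ _ t'%:E); first by rewrite lte_fin.
  by apply: ereal_sup_ubound; exists (t', G.2).
Qed.

Lemma end_gt A : fpts T A -> (A.1%:E < eend A)%E.
Proof.
move=> fA; have H : exists G, seg A G /\ G.1 = A.1 by exists A; split=> //; apply: seg_refl.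
by have [] := (in_epoch A.1 fA).2 H.
Qed.

Lemma end_crit A r : fpts T A -> eend A = r%:E -> r \in Cr.
Proof.
move=> fA Er; apply: contrapT => /negP rC.
have Ar : A.1 < r by have := end_gt fA; rewrite Er lte_fin.
have [cA cAC cAle] := n0 fA.
have [c0 c0C [c0r nc]] := @prev_crit R Cr r (ex_intro2 _ _ cA cAC (le_trans cAle (ltW Ar))).
have c0r' : c0 < r by rewrite lt_neqAle c0r andbT; apply: contraNneq rC => <-.
pose t := Num.max c0 A.1.
have tr : t < r by rewrite /t gt_max c0r' Ar.
have ht1 : A.1 <= t by rewrite /t le_max lexx orbT.
have ht2 : c0 <= t by rewrite /t le_max lexx.
have tE : (t%:E < eend A)%E by rewrite Er lte_fin.
have [G [sG G1]] := (in_epoch t fA).1 (conj ht1 tE).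
have nc' : nocrit G.1 r.
  move=> c cC hc; apply: (nc c cC); move: hc; rewrite G1; lra.
have Gr : G.1 <= r by rewrite G1; exact: ltW tr.
have sG' := seg_up fA sG Gr nc'.
have := (in_epoch r fA).2 (ex_intro _ _ (conj sG' erefl)).
by rewrite Er lte_fin ltxx => -[].
Qed.


Definition Psi k x t := \sum_(P0 \in [set P0 | fpts T P0 /\ P0.1 = t /\ (ffreq T P0).2 = k])
  (if (b P0).1 == x then (ffreq T P0).1 else 0).

Definition gA x t A := if [&& (b A).1 == x, A.1 <= t & (t%:E < eend A)%E]
  then (ffreq T A).1 else 0.

Lemma ES_finite : finite_set [set A | ES A].
Proof.
apply: (@sub_finite_set _ _ (\bigcup_(c in [set` Cr]) [set p | fpts T p /\ p.1 = c])).
- move=> A eA; exists A.1; [exact: es_crit | by split => //; case: eA].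
- by apply: bigcup_finite; [exact: finite_seq | move=> c _; exact: (n1 c)].
Qed.

Definition es_of P0 := xget P0 [set A | ES A /\ seg A P0].

Lemma es_ofP P0 : fpts T P0 -> ES (es_of P0) /\ seg (es_of P0) P0.
Proof. by move=> fP0; apply: (@xgetPex _ P0 [set A | ES A /\ seg A P0]); apply: es_exists. Qed.

Lemma Psi_ES k x t : Psi k x t =
  \sum_(A \in [set A | ES A /\ (ffreq T A).2 = k]) gA x t A.
Proof.
pose F := fun A => if (b A).1 == x then (ffreq T A).1 else 0.
transitivity (\sum_(A \in [set A | (ES A /\ (ffreq T A).2 = k) /\
                     (A.1 <= t /\ (t%:E < eend A)%E)]) F A).
- rewrite (reindex_fsbig es_of [set P0 | fpts T P0 /\ P0.1 = t /\ (ffreq T P0).2 = k]).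
    apply: eq_fsbigr => P0 /set_mem [fP0 _]; have [eA sA] := es_ofP fP0.
    by rewrite /F (seg_freq sA); case: sA => _ _ -> _.
  split.
  + move=> P0 [fP0 [h1 h2]]; have [eA sA] := es_ofP fP0.
    have fA : fpts T (es_of P0) by case: eA.
    split; first by split=> //; rewrite -(seg_freq sA).
    by apply/(in_epoch t fA); exists P0.
  + move=> P1 P2 /set_mem [f1 [h1 _]] /set_mem [f2 [h2 _]] E.
    have [eA1 sA1] := es_ofP f1; have [eA2 sA2] := es_ofP f2.
    rewrite E in sA1 eA1.
    have fA : fpts T (es_of P2) by case: eA2.
    by apply: (n2 f1 f2 fA); [rewrite h1 h2|case: sA1|case: sA2].
  + move=> A [[eA hk] hA]; have fA : fpts T A by case: eA.
    have [G [sG G1]] := (in_epoch t fA).1 hA.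
    have fG : fpts T G by case: sG.
    exists G; first by split=> //; split=> //; rewrite (seg_freq sG).
    have [eA' sA'] := es_ofP fG; exact: es_unique eA' eA sA' sG.
- transitivity (\sum_(A \in [set A | (ES A /\ (ffreq T A).2 = k) /\
                     (A.1 <= t /\ (t%:E < eend A)%E)]) gA x t A).
    apply: eq_fsbigr => A /set_mem [_ [h1 h2]].
    by rewrite /gA /F h1 h2 !andbT.
  apply: fsbig_widen; first by move=> A [].
  move=> A [hA nA]; rewrite /preimage /= /gA.
  case: ifP => // /and3P [_ h1 h2]; exfalso; apply: nA; by split.
Qed.

Lemma ESk_finite k : finite_set [set A | ES A /\ (ffreq T A).2 = k].
Proof. by apply: (sub_finite_set _ ES_finite) => A []. Qed.

Lemma barcode_pinfty k x tb : (forall c, c \in Cr -> c < tb) ->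
  barcode T b k x +oo%E = Psi k x tb.
Proof.
move=> Htb; rewrite Psi_ES /barcode; apply: eq_fsbigr => A /set_mem [eA _].
have fA : fpts T A by case: eA.
have Atb : A.1 <= tb := ltW (Htb _ (es_crit eA)).
rewrite /gA Atb /=.
rewrite andbF subr0; case: ((b A).1 == x) => //=.
have := end_gt fA; case E: (eend A) => [r| |] //= _.
- have rC := end_crit fA E; rewrite lte_fin.
  by have -> : (tb < r) = false by apply/negbTE; rewrite -leNgt; apply/ltW/Htb.
- by rewrite ltry.
Qed.

Lemma barcode_fin_le k x r : r <= x -> barcode T b k x r%:E = 0.
Proof.
move=> rx; apply: fsbig1 => A [eA _]; have fA : fpts T A by case: eA.
have xA : (b A).1 <= A.1 by case: (b_cov fA).
case: eqP => bx /=; last by rewrite subr0.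
have -> : (eend A == r%:E) = false.
  apply/negbTE; apply/eqP => E; have := end_gt fA; rewrite E lte_fin; lra.
have -> : (A.1%:E == r%:E) && ((b A).1 < A.1) = false.
  apply/negbTE; rewrite eqe; apply/negP => /andP[/eqP h1 h2]; lra.
by rewrite subr0.
Qed.

Lemma barcode_fin_gt k x r t0 : x < r -> t0 < r ->
  (forall c, c \in Cr -> ~ (t0 <= c < r)) ->
  barcode T b k x r%:E = Psi k x t0 - Psi k x r.
Proof.
move=> xr t0r Hc; rewrite !Psi_ES /barcode.
rewrite -[X in _ + X]mulN1r mulr_fsumr -fsbig_split; last exact: ESk_finite.
apply: eq_fsbigr => A /set_mem [eA _]; rewrite mulN1r.
have fA : fpts T A by case: eA.
rewrite /gA; case: eqP => bx /=; last by rewrite subr0.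
rewrite -bx in xr *; apply: arith => //.
- by case: (b_cov fA).
- exact: end_gt.
- by move=> e' E; apply: Hc; apply: end_crit E.
- by apply: Hc; apply: es_crit.
Qed.

End Nice.

Lemma sum_const_seq (R : realType) (T : choiceType) (op : Monoid.com_law (0 : R))
  (Hop : forall a b, op a b = a + b) (s : seq T) (c : R) :
  \big[op/0]_(i <- s) c = c *+ size s.
Proof. by elim: s => [|a s IH]; rewrite ?big_nil ?big_cons ?IH ?mulrS ?Hop. Qed.

Section Fib.
Variables (R : realType) (d : nat) (T T' : ftree R d) (Cr : seq R).
Variables (b b' : pt R d -> pt R d).
Hypotheses (HT : nice T Cr) (HT' : nice T' Cr) (Hb : elder T b) (Hb' : elder T' b').

Lemma Psi_splinter k x t : splinters T' T -> Psi T' b' k x t = Psi T b k x t.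
Proof.
move=> [om [[omf _] surj ht H4]].
have bom A : fpts T' A -> (b' A).1 = (b (om A)).1.
  move=> fA; have fG := omf A fA.
  have [_ E1 _ _] := H4 _ fG A A fA fA erefl erefl.
  apply: le_anti; apply/andP; split.
  - have : fpts (subtree T (om A)) (b (om A)) by split; [apply: b_pts Hb _ fG|apply: b_cov Hb _ fG].
    rewrite -E1 => -[A1 [fA1 cA1] <-].
    rewrite ht //; apply: le_trans (b_min Hb' fA (b_leaf Hb' fA1) (covers_trans cA1 (b_cov Hb' fA1))) _.
    by case: (b_cov Hb' fA1).
  - have : fpts (subtree T (om A)) (om (b' A)).
      by rewrite -E1; exists (b' A) => //; split; [apply: b_pts Hb' _ fA|apply: b_cov Hb' _ fA].
    move=> [fB cB]; rewrite -(ht _ (b_pts Hb' fA)).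
    apply: le_trans (b_min Hb fG (b_leaf Hb fB) (covers_trans cB (b_cov Hb fB))) _.
    by case: (b_cov Hb fB).
pose X := [set G | fpts T G /\ G.1 = t /\ (ffreq T G).2 = k].
pose X' := [set G | fpts T' G /\ G.1 = t /\ (ffreq T' G).2 = k].
pose fib G := [set A0 | fpts T' A0 /\ om A0 = G].
have finX : finite_set X.
  by apply: sub_finite_set (n1 HT t) => G [fG [h _]].
have finX' : finite_set X'.
  by apply: sub_finite_set (n1 HT' t) => G [fG [h _]].
have fibfreq G : fpts T G -> forall A, fib G A ->
    ffreq T' A = ((ffreq T G).1 / (#|` fset_set (fib G)|)%:R, (ffreq T G).2).
  move=> fG A [fA E]; rewrite -E in fG *.
  have [_ _ _ [n [cn fa _]]] := H4 _ fG A A fA fA erefl erefl.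
  by rewrite /fib (card_fset_set cn).
have fibpos G : fpts T G -> (0 < #|` fset_set (fib G)|)%N.
  move=> fG; have [A0 fA0 E] := surj G fG.
  have [_ _ _ [n [cn _ _]]] := H4 _ fG A0 A0 fA0 fA0 E E.
  have finf : finite_set (fib G) by exists n.
  rewrite cardfs_gt0; apply/eqP => E0.
  have : A0 \in fset_set (fib G) by rewrite in_fset_set //; apply/mem_set.
  by rewrite E0 inE.
have fibfin G : fpts T G -> finite_set (fib G).
  move=> fG; have [A0 fA0 E] := surj G fG.
  have [_ _ _ [n [cn _ _]]] := H4 _ fG A0 A0 fA0 fA0 E E.
  by exists n.
rewrite /Psi.
transitivity (\sum_(A \in X') \sum_(G \in X)
   (if om A == G then (if (b' A).1 == x then (ffreq T' A).1 else 0) else 0)).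
  apply: eq_fsbigr => A /set_mem [fA [hA kA]].
  rewrite -(fsbig_widen [set om A]) ?fsbig_set1 ?eqxx //.
  - move=> _ ->; split; first exact: omf.
    split; first by rewrite ht.
    by rewrite -kA (fibfreq (om A) (omf A fA) A (conj fA erefl)).
  - move=> G [_ /= ne]; rewrite /preimage /=; case: eqP => // E.
    by exfalso; apply: ne; rewrite E.
rewrite exchange_fsbig //; apply: eq_fsbigr => G /set_mem [fG [hG kG]].
rewrite -(fsbig_widen (fib G) X'); first last.
- move=> A [[fA _] nf]; rewrite /preimage /=; case: eqP => // E.
  by exfalso; apply: nf; split.
- move=> A [fA omA]; split=> //; split; first by rewrite -(ht _ fA) omA.
  by rewrite (fibfreq G fG A (conj fA omA)).
pose N := #|` fset_set (fib G)|.
transitivity (\sum_(A \in fib G)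
    (if (b G).1 == x then (ffreq T G).1 / N%:R else 0)).
  apply: eq_fsbigr => A /set_mem [fA omA].
  by rewrite omA eqxx (bom A fA) omA (fibfreq G fG A (conj fA omA)).
rewrite fsbig_finite ?fibfin //. rewrite (@sum_const_seq R _ _ (fun a b => erefl)) -/N.
case: ifP => _; last by rewrite mul0rn.
rewrite -[X in X = _]mulr_natr divfK // pnatr_eq0 -lt0n; first exact: fibpos.
exact: fibfin.
Qed.
End Fib.

Section Concrete.
Variables (R : realType) (d : nat).
Local Notation V := 'rV[R]_d.
Variables (Bm : 'M[R]_d) (K : set (set V)) (F : set V -> R).
Hypothesis Hp : periodic_filtered_complex Bm K F.

Lemma latP u : lat Bm u <-> exists2 z, introw z & z *m Bm = u.
Proof. by split=> [[z zi <-]|[z zi <-]]; exists z. Qed.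

Lemma lat0 : lat Bm 0.
Proof. by apply/latP; exists 0; [move=> i; rewrite mxE rpred0|rewrite mul0mx]. Qed.

Lemma latB u v : lat Bm u -> lat Bm v -> lat Bm (u - v).
Proof.
move=> /latP[z zi <-] /latP[w wi <-]; apply/latP; exists (z - w); last by rewrite mulmxBl.
by move=> i; rewrite !mxE rpredB.
Qed.

Lemma latN u : lat Bm u -> lat Bm (- u).
Proof. by move=> hu; rewrite -sub0r; apply: latB => //; apply: lat0. Qed.

Lemma latD u v : lat Bm u -> lat Bm v -> lat Bm (u + v).
Proof. by move=> hu hv; rewrite -[v]opprK; apply: latB => //; apply: latN. Qed.

Lemma trP (S : set V) u y : tr S u y <-> S (y - u).
Proof. by split=> [[z Sz <-]|h]; [rewrite addrK|exists (y - u); rewrite ?subrK]. Qed.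

Lemma tr_cont (u : V) : continuous (fun z : V => z + u).
Proof. by move=> z; apply: continuousD; [move=> ? | exact: cst_continuous]. Qed.

Lemma tr_connected (S : set V) u : connected S -> connected (tr S u).
Proof.
move=> cS; apply: (connected_continuous_connected cS).
exact/continuous_subspaceT/tr_cont.
Qed.

Lemma per s u : K s -> lat Bm u -> K (tr s u) /\ F (tr s u) = F s.
Proof. by case: Hp => _ _ H _ _; apply: H. Qed.

Lemma sublevel_tr t x u : lat Bm u -> sublevel K F t x -> sublevel K F t (x + u).
Proof.
move=> lu [c [Kc Fc] cx]; have [K' F'] := per Kc lu.
by exists (tr c u); [split=> //; rewrite F'|exists x].
Qed.

Lemma comp_tr_sub t y u : lat Bm u -> sublevel K F t y ->
  tr (Defs.comp K F t y) u `<=` Defs.comp K F t (y + u).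
Proof.
move=> lu sy; apply: connected_component_max.
- by exists y => //; apply: connected_component_refl.
- move=> z /trP h; have := sublevel_tr lu (connected_component_sub h).
  by rewrite subrK.
- by apply: tr_connected; apply: component_connected.
Qed.

Lemma comp_tr t x u : lat Bm u -> sublevel K F t x ->
  Defs.comp K F t (x + u) = tr (Defs.comp K F t x) u.
Proof.
move=> lu sx; apply/seteqP; split; last exact: comp_tr_sub.
move=> z h; apply/trP.
have := @comp_tr_sub t (x + u) (- u) (latN lu) (sublevel_tr lu sx).
rewrite addrK; apply; apply/trP; by rewrite opprK subrK.
Qed.

Lemma ocomp_tr t x u : lat Bm u -> sublevel K F t x ->
  ocomp Bm K F t (x + u) = ocomp Bm K F t x.
Proof.
move=> lu sx; rewrite /ocomp comp_tr //; apply/seteqP; split=> y [v lv h].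
- exists (u + v); first exact: latD.
  move/trP: h => /trP h; apply/trP; by rewrite opprD addrA addrAC.
- exists (v - u); first exact: latB.
  move/trP: h => h; apply/trP/trP; by rewrite opprB addrA addrAC addrK.
Qed.

Lemma ocomp_self t x : sublevel K F t x -> ocomp Bm K F t x x.
Proof.
move=> sx; exists 0; first exact: lat0.
by apply/trP; rewrite subr0; apply: connected_component_refl.
Qed.

Lemma ocomp_comp t x y : Defs.comp K F t x y -> ocomp Bm K F t y = ocomp Bm K F t x.
Proof. by move=> h; rewrite /ocomp /Defs.comp (same_connected_component h). Qed.

Lemma ocomp_eq t x z : sublevel K F t x -> ocomp Bm K F t x z ->
  ocomp Bm K F t z = ocomp Bm K F t x.
Proof.
move=> sx [u lu /trP h].
have sz : sublevel K F t (z - u) := connected_component_sub h.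
by rewrite -(subrK u z) ocomp_tr // (ocomp_comp h).
Qed.


Lemma cball_connected k : connected (@cball R k).
Proof.
have -> : @cball R k = \bigcup_(x in @cball R k) ((fun r : R => r *: x) @` `[0, 1]).
  apply/seteqP; split.
  - move=> y cy; exists y => //; exists 1; last by rewrite scale1r.
    by rewrite /= in_itv /= lexx ler01.
  - move=> y [x cx [r r01 <-]]; move: r01; rewrite /= in_itv /= => /andP[r0 r1].
    rewrite /cball /= normrZ ger0_norm //; apply: mulr_ile1 => //.
apply: bigcup_connected.
- exists 0 => x cx; exists 0; last by rewrite scale0r.
  by rewrite /= in_itv /= lexx ler01.
- move=> x cx; apply: (connected_continuous_connected (@segment_connected R 0 1)).

  exact/continuous_subspaceT/scalel_continuous.
Qed.

Lemma cell_connected s : K s -> connected s.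
Proof.
move=> Ks; case: Hp => _ [Hc _ _] _ _ _.
have [k [f [fc _ fs _]]] := Hc s Ks; rewrite -fs.
exact: connected_continuous_connected (@cball_connected k) fc.
Qed.

Lemma mt_nice : exists Cr, nice (merge_tree Bm K F) Cr.
Proof.
case: (Hp) => _ _ _ _ [S [finS SK] Scov].
pose Cr := [seq F s | s <- fset_set S].
have Fcrit c : K c -> F c \in Cr.
  move=> Kc; have [s [u [Ss lu ->]]] := Scov c Kc.
  rewrite (per (SK s Ss) lu).2; apply: map_f; rewrite in_fset_set //; exact: mem_set.
have subl_const a b0 : a <= b0 -> nocrit Cr a b0 -> sublevel K F b0 = sublevel K F a.
  move=> ab nc; apply/seteqP; split=> y [c [Kc Fc] cy]; exists c => //; split => //.
  - rewrite leNgt; apply/negP => h; apply: (nc _ (Fcrit c Kc)); lra.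
  - exact: le_trans Fc ab.
exists Cr; split.
- move=> p [x [[c [Kc Fc] _] _]]; exists (F c) => //; exact: Fcrit.
- move=> t.
  apply: (@sub_finite_set _ _ ((fun s => (t, ocomp Bm K F t (xget 0 s))) @` S)); last exact: finite_image.
  move=> [p1 p2] [[x /= [sx ->]] /= E]; subst p1.
  case: sx => c [Kc Fc] cx; have [s [u [Ss lu cE]]] := Scov c Kc; subst c.
  move/trP: cx => ys; exists s => //.
  have Fs : F s <= t by rewrite -(per (SK s Ss) lu).2.
  have ssub : s `<=` sublevel K F t by move=> z sz; exists s => //; split => //; apply: SK.
  have cs := cell_connected (SK s Ss).
  have h : Defs.comp K F t (x - u) (xget 0 s).
    rewrite /Defs.comp; apply: (connected_component_max ys ssub cs); apply: xgetPex; by exists (x - u).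
  by congr pair; rewrite (ocomp_comp h) -[in RHS](subrK u x) (ocomp_tr lu (ssub _ ys)).
- move=> [p1 p2] [q1 q2] [a1 a2] [x [sx /= ->]] [y [sy /= ->]] [z [sz /= ->]] /= E [_ ca] [_ cb].
  subst q1; have zx := ca _ (ocomp_self sz); have zy := cb _ (ocomp_self sz).
  by congr pair; rewrite -(ocomp_eq sx zx) (ocomp_eq sy zy).
- move=> [a1 a2] t [z [sz /= ->]] /= at_.
  have smono : sublevel K F a1 `<=` sublevel K F t.
    by move=> y [c [Kc Fc] cy]; exists c => //; split => //; apply: le_trans Fc at_.
  exists (t, ocomp Bm K F t z); split=> //; first by exists z; split => //; apply: smono.
  split=> //= y [u lu /trP h]; exists u => //; apply/trP.
  have sub : Defs.comp K F a1 z `<=` Defs.comp K F t z.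
    rewrite /Defs.comp; apply: connected_component_max.
    - exact: connected_component_refl.
    - by move=> w /connected_component_sub /smono.
    - exact: component_connected.
  exact: sub _ h.
- move=> [p1 p2] t [x [sx /= ->]] nc1 nc2 /=.
  have E : sublevel K F t = sublevel K F p1.
    have [h|h] := leP t p1; first by rewrite (subl_const t p1 h nc1).
    by rewrite (subl_const p1 t (ltW h) nc2).
  split; first by exists x; split; rewrite /= ?E // /ocomp /Defs.comp E.
  by rewrite /freq /stab /Defs.comp /= E.
Qed.

End Concrete.

Lemma nice_sub (R : realType) d (T : ftree R d) (Cr0 Cr : seq R) :
  {subset Cr0 <= Cr} -> nice T Cr0 -> nice T Cr.
Proof.
move=> sub [h0 h1 h2 h3 h4]; split=> //.
- by move=> p fp; have [c cC cp] := h0 p fp; exists c => //; exact: sub.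
- move=> p t fp nc1 nc2; apply: h4 => // c cC.
  + exact: nc1 c (sub c cC).
  + exact: nc2 c (sub c cC).
Qed.

Unset Implicit Arguments.
Theorem mainTheorem13 (R : realType) (d : nat)
    (Bm Bm' : 'M[R]_d) (K K' : set (set 'rV[R]_d)) (F F' : set 'rV[R]_d -> R) :
  periodic_filtered_complex Bm K F ->
  periodic_filtered_complex Bm' K' F' ->
  splinters (merge_tree Bm' K' F') (merge_tree Bm K F) ->
  forall b b' : pt R d -> pt R d,
    elder (merge_tree Bm K F) b ->
    elder (merge_tree Bm' K' F') b' ->
    forall (k : nat) (x : R) (e : \bar R), (k <= d)%N -> e <> -oo%E ->
      barcode (merge_tree Bm' K' F') b' k x e = barcode (merge_tree Bm K F) b k x e.
Proof.
move=> Hp Hp' spl b b' Hb Hb' k x e _ eNy.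
have [Cr1 N1] := mt_nice Hp; have [Cr2 N2] := mt_nice Hp'.
have NM : nice (merge_tree Bm K F) (Cr1 ++ Cr2).
  by apply: nice_sub N1 => c h; rewrite mem_cat h.
have NM' : nice (merge_tree Bm' K' F') (Cr1 ++ Cr2).
  by apply: nice_sub N2 => c h; rewrite mem_cat h orbT.
have PS := fun t => Psi_splinter NM NM' Hb Hb' k x t spl.
case: e eNy => [r| |] // _.
- have [xr|rx] := ltP x r.
  + have [t0 [t0r H0]] := gap_below (Cr1 ++ Cr2) r.
    rewrite (barcode_fin_gt NM Hb k xr t0r H0) (barcode_fin_gt NM' Hb' k xr t0r H0).
    by rewrite !PS.
  + by rewrite (barcode_fin_le NM Hb k rx) (barcode_fin_le NM' Hb' k rx).
- have [tb Htb] := above_all (Cr1 ++ Cr2).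
  by rewrite (barcode_pinfty NM Hb k x Htb) (barcode_pinfty NM' Hb' k x Htb) PS.
Qed.
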